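(* Let $q$ be a prime power, $\mathbb{F}$ an extension field of $\mathbb{F}_q$, and $C$ an $[n,k]_{\mathbb{F}}$ code that is MRD, with generator matrix $G\in\mathbb{F}^{k\times n}$. Let $V_1,\dots,V_\ell$ be $\mathbb{F}_q$-subspaces of $\mathbb{F}_q^n$, each of dimension at most $k$. Then $\dim\big(\bigcap_{i=1}^\ell G_{V_i}\big)\ge\dim\big(\bigcap_{i=1}^\ell W_{V_i}\big)$, where $W=(Z_{i,j})_{i\in[k],j\in[n]}\in\mathbb{F}(Z_{1,1},\dots,Z_{k,n})^{k\times n}$ is a matrix of independent variables.
   Context: $C=\{G^T\bm{u}:\bm{u}\in\mathbb{F}^k\}$ is a $k$-dimensional subspace of $\mathbb{F}^n$; it is MRD if every nonzero codeword $\bm{v}$ satisfies $\dim_{\mathbb{F}_q}\mathrm{span}_{\mathbb{F}_q}\{v_1,\dots,v_n\}\ge n-k+1$. For an $\mathbb{F}_q$-subspace $V\subseteq\mathbb{F}_q^n$ and a matrix $H$ with $n$ columns, $H_V$ is the column span (over the field containing the entries of $H$) of $HA$, where $A\in\mathbb{F}_q^{n\times\dim V}$ is any matrix whose $\mathbb{F}_q$-column span is $V$; dimensions of $G_{V_i}$-intersections are over $\mathbb{F}$ and of $W_{V_i}$-intersections over $\mathbb{F}(Z_{1,1},\dots,Z_{k,n})$. *)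

(* Defs.v *)
From HB Require Import structures.
From mathcomp Require Import all_boot all_order all_algebra.
From mathcomp Require Import fraction.
From mathcomp Require Import mpoly.
Set Implicit Arguments. Unset Strict Implicit. Unset Printing Implicit Defensive.
Import Order.TTheory GRing.Theory Num.Theory.
Local Open Scope ring_scope.

(* K plays the role of F_q (a finite field, so q = #|K| is a prime power);
   F is an extension field of K, given by the (injective) field morphism iota. *)

Definition Fq_indep (K : finFieldType) (F : fieldType) (iota : {rmorphism K -> F})
  (n : nat) (v : 'rV[F]_n) (S : {set 'I_n}) : bool :=
  [forall a : {ffun 'I_n -> K},
     (\sum_(j in S) iota (a j) * v 0 j == 0) ==> [forall j in S, a j == 0]].

Definition Fq_rank (K : finFieldType) (F : fieldType) (iota : {rmorphism K -> F})
  (n : nat) (v : 'rV[F]_n) : nat :=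
  \max_(S : {set 'I_n} | Fq_indep iota v S) #|S|.

(* The code C = {G^T u : u in F^k} is MRD: every nonzero codeword has
   F_q-rank at least n - k + 1. (codeword G^T u written as row vector u^T G) *)
Definition is_MRD (K : finFieldType) (F : fieldType) (iota : {rmorphism K -> F})
  (k n : nat) (G : 'M[F]_(k, n)) : Prop :=
  forall u : 'rV[F]_k, u *m G != 0 -> (n - k + 1 <= Fq_rank iota (u *m G))%N.

(* H_V for an F_q-subspace V of F_q^n, represented as the row space of
   V : 'M[K]_n.  With A := V^T (whose F_q-column span is V), H_V is the column
   span of H *m A; we represent it by the row space of its transpose
   (H *m A)^T = A^T *m H^T = V *m H^T, a subspace of 'rV_k. *)
Definition subsp_img (K : finFieldType) (L : fieldType) (f : K -> L)
  (k n : nat) (H : 'M[L]_(k, n)) (V : 'M[K]_n) : 'M[L]_(n, k) :=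
  map_mx f V *m H^T.

Definition ratfun (F : fieldType) (k n : nat) : fieldType :=
  {fraction {mpoly F[k * n]}}.

Definition to_ratfun (K : finFieldType) (F : fieldType) (iota : {rmorphism K -> F})
  (k n : nat) (x : K) : ratfun F k n :=
  tofrac (mpolyC (k * n) (iota x)).

Definition Wgen (F : fieldType) (k n : nat) : 'M[ratfun F k n]_(k, n) :=
  \matrix_(i < k, j < n) tofrac ('X_(mxvec_index i j) : {mpoly F[k * n]}).

(* Main.v *)
From HB Require Import structures.
From mathcomp Require Import all_boot all_order all_algebra.
From mathcomp Require Import fraction.
From mathcomp Require Import mpoly.
Require Import Defs.
From mathcomp Require Import zify.
Set Implicit Arguments. Unset Strict Implicit. Unset Printing Implicit Defensive.
Import Order.TTheory GRing.Theory Num.Theory.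
Local Open Scope ring_scope.

Definition fM (R : comNzRingType) (k n l : nat) (Y : 'I_l -> 'M[R]_(n,k))
  (C : 'I_l -> 'M[R]_n) (v : 'rV[R]_(k + l*n)) : 'rV[R]_(l*(k+n)) :=
  mxvec (\matrix_(i < l) row_mx (row i (vec_mx (rsubmx v)) *m Y i - lsubmx v)
                                (row i (vec_mx (rsubmx v)) *m C i)).

Lemma fM_linear (R : comNzRingType) (k n l : nat) (Y : 'I_l -> 'M[R]_(n,k))
  (C : 'I_l -> 'M[R]_n) : linear (fM Y C).
Proof.
move=> a u v; rewrite /fM -linearP; congr mxvec.
apply/row_matrixP => i; rewrite linearP /= !rowK !linearP /=.
rewrite !mulmxDl -!scalemxAl !rowK scale_row_mx add_row_mx.
congr row_mx; rewrite scalerBr scalerN; by rewrite !addrA; congr (_ + _); rewrite addrAC.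
Qed.

HB.instance Definition _ (R : comNzRingType) (k n l : nat) (Y : 'I_l -> 'M[R]_(n,k))
  (C : 'I_l -> 'M[R]_n) :=
  GRing.isLinear.Build R _ _ *:%R (fM Y C) (fM_linear Y C).

Definition Mmat (R : comNzRingType) (k n l : nat) (Y : 'I_l -> 'M[R]_(n,k))
  (C : 'I_l -> 'M[R]_n) := lin1_mx (fM Y C).

Lemma mulMmat (R : comNzRingType) (k n l : nat) (Y : 'I_l -> 'M[R]_(n,k))
  (C : 'I_l -> 'M[R]_n) v : v *m Mmat Y C = fM Y C v.
Proof. exact: (mul_rV_lin1 (fM Y C)). Qed.

Lemma map_fM (R S : comNzRingType) (phi : {rmorphism R -> S}) (k n l : nat)
  (Y : 'I_l -> 'M[R]_(n,k)) (C : 'I_l -> 'M[R]_n) v :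
  map_mx phi (fM Y C v) = fM (fun i => map_mx phi (Y i)) (fun i => map_mx phi (C i)) (map_mx phi v).
Proof.
rewrite /fM map_mxvec; congr mxvec; apply/row_matrixP => i.
rewrite -map_row !rowK map_row_mx map_mxB !map_mxM map_row map_vec_mx map_lsubmx map_rsubmx.
by [].
Qed.

Lemma map_Mmat (R S : comNzRingType) (phi : {rmorphism R -> S}) (k n l : nat)
  (Y : 'I_l -> 'M[R]_(n,k)) (C : 'I_l -> 'M[R]_n) :
  map_mx phi (Mmat Y C) = Mmat (fun i => map_mx phi (Y i)) (fun i => map_mx phi (C i)).
Proof.
by apply: map_lin1_mx => v; rewrite map_fM.
Qed.

Lemma fM_eq0 (L : comNzRingType) (k n l : nat) (Y : 'I_l -> 'M[L]_(n,k))
  (C : 'I_l -> 'M[L]_n) v :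
  fM Y C v = 0 ->
  forall i, row i (vec_mx (rsubmx v)) *m Y i = lsubmx v /\ row i (vec_mx (rsubmx v)) *m C i = 0.
Proof.
rewrite /fM => /eqP; rewrite mxvec_eq0 => /eqP /row_matrixP H i.
have := H i; rewrite rowK row0 => /eqP; rewrite row_mx_eq0 => /andP[/eqP H1 /eqP H2].
by split => //; apply/eqP; rewrite -subr_eq0 H1.
Qed.

Definition Pz (L : comNzRingType) (k m : nat) : 'M[L]_(k + m, k) := col_mx 1%:M 0.

Lemma mulPz (L : comNzRingType) (k m : nat) (v : 'rV[L]_(k + m)) : v *m Pz L k m = lsubmx v.
Proof. by rewrite -{1}(hsubmxK v) /Pz mul_row_col mulmx1 mulmx0 addr0. Qed.

Lemma cap_le_ker (L : fieldType) k n l (Y : 'I_l -> 'M[L]_(n,k)) (C : 'I_l -> 'M[L]_n)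
  (r : 'I_l -> nat)
  (HY : forall i, Y i = pid_mx (r i) *m Y i) (HC : forall i, C i = copid_mx (r i))
  (Hr : forall i, (r i <= n)%N) :
  (\rank (\bigcap_(i < l) <<Y i>>)%MS <= \rank (kermx (Mmat Y C)))%N.
Proof.
apply: (leq_trans _ (mxrankM_maxl _ (Pz L k (l * n)))).
apply: mxrankS; apply/row_subP => j.
set z := row j _.
have zi : forall i, (z <= Y i)%MS.
  move=> i; apply: (submx_trans (row_sub j _)).
  by rewrite -(genmxE (Y i)); apply: (bigcapmx_inf i) => //.
pose x : 'M[L]_(l, n) := \matrix_(i < l) (z *m pinvmx (Y i) *m pid_mx (r i)).
pose v := row_mx z (mxvec x).
have -> : z = v *m Pz L k (l * n) by rewrite mulPz row_mxKl.
rewrite submxMr //; apply/sub_kermxP.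
rewrite mulMmat /fM row_mxKr row_mxKl mxvecK.
apply/eqP; rewrite mxvec_eq0; apply/eqP/row_matrixP => i.
rewrite rowK row0 rowK -row_mx0; congr row_mx.
  by rewrite -[_ *m Y i]mulmxA -HY mulmxKpV ?subrr.
by rewrite HC -[_ *m copid_mx _]mulmxA mul_pid_mx_copid ?mulmx0.
Qed.

Lemma ker_le_cap (L : fieldType) k n l (Y : 'I_l -> 'M[L]_(n,k)) (C : 'I_l -> 'M[L]_n)
  (Hinj : forall i (x : 'rV_n), x *m C i = 0 -> x *m Y i = 0 -> x = 0) :
  (\rank (kermx (Mmat Y C)) <= \rank (\bigcap_(i < l) <<Y i>>)%MS)%N.
Proof.
set M := Mmat Y C.
have Hcap : \rank (kermx M :&: kermx (Pz L k (l * n)))%MS = 0%N.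
  apply/eqP; rewrite mxrank_eq0; apply/rowV0P => v.
  rewrite sub_capmx => /andP[/sub_kermxP vM /sub_kermxP vP].
  rewrite mulPz in vP; rewrite /M mulMmat in vM.
  have H := fM_eq0 vM.
  have Hx : vec_mx (rsubmx v) = 0.
    apply/row_matrixP => i; rewrite row0; have [H1 H2] := H i.
    by apply: (Hinj i) => //; rewrite H1.
  by rewrite -(hsubmxK v) vP -(vec_mxK (rsubmx v)) Hx linear0 row_mx0.
have <- : \rank (kermx M *m Pz L k (l * n)) = \rank (kermx M).
  by rewrite -(mxrank_mul_ker (kermx M) (Pz L k (l * n))) Hcap addn0.
apply: mxrankS; apply/row_subP => j; rewrite row_mul mulPz.
have vM : row j (kermx M) *m M = 0 by apply/sub_kermxP; exact: row_sub.
rewrite /M mulMmat in vM.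
apply/sub_bigcapmxP => i _; rewrite genmxE.
have [<- _] := fM_eq0 vM i; exact: submxMl.
Qed.

Lemma rank_spec (R : idomainType) (L : fieldType) (phi : {rmorphism R -> L}) m p
  (P : 'M[R]_(m,p)) :
  (\rank (map_mx phi P) <= \rank (map_mx (@tofrac R) P))%N.
Proof.
set A := map_mx phi P.
set f := maxrankfun A.
have rf : row_free (rowsub f A) := maxrowsub_free A.
have fB : row_full (rowsub f A)^T by rewrite /row_full mxrank_tr.
set g := fullrankfun fB.
have U : rowsub g (rowsub f A)^T \in unitmx := fullrowsub_unit fB.
set PS := rowsub g (rowsub f P)^T.
have E1 : map_mx phi PS = rowsub g (rowsub f A)^T by apply/matrixP => i j; rewrite !mxE.
have dPS : \det PS != 0.
  move: U; rewrite -E1 unitmxE det_map_mx unitfE; apply: contraNneq => ->.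
  by rewrite rmorph0.
set Pf := map_mx (@tofrac R) P.
have E2 : map_mx (@tofrac R) PS = rowsub g (rowsub f Pf)^T by apply/matrixP => i j; rewrite !mxE.
have U2 : rowsub g (rowsub f Pf)^T \in unitmx.
  by rewrite -E2 unitmxE det_map_mx unitfE tofrac_eq0.
rewrite -(mxrank_unit U2); apply: leq_trans (mxrankS (rowsub_sub g _)) _.
by rewrite mxrank_tr; exact: mxrankS (rowsub_sub f _).
Qed.

Lemma indep_card (K : finFieldType) (F : fieldType) (iota : {rmorphism K -> F})
  (k n : nat) (B : 'M[K]_(k, n)) (HB : \rank B = k) (c : 'rV[F]_n)
  (Hc : c *m (map_mx iota B)^T = 0) (S : {set 'I_n}) (HS : Fq_indep iota c S) :
  (#|S| <= n - k)%N.
Proof.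
pose T := (~: S).
pose B' := colsub (fun t : 'I_#|T| => enum_val t) B.
have rfB : row_free B by rewrite /row_free HB.
have K0 : kermx B' = 0.
  apply/eqP/rowV0P => w /sub_kermxP Hw.
  pose a := w *m B.
  have ha : forall j, j \notin S -> a 0 j = 0.
    move=> j jS; have jT : j \in T by rewrite in_setC.
    have := congr1 (fun M : 'M[K]_(1, #|T|) => M 0 (enum_rank_in jT j)) Hw.
    rewrite /= !mxE /B' /mxsub; under eq_bigr do rewrite mxE (enum_rankK_in jT jT).
    by [].

  have hsum : \sum_(j in S) iota (a 0 j) * c 0 j = 0.
    have : map_mx iota a *m c^T = 0.
      by rewrite /a map_mxM -mulmxA -[map_mx iota B *m c^T]trmxK trmx_mul trmxK Hc trmx0 mulmx0.
    move/matrixP/(_ 0 0); rewrite !mxE => H; apply: etrans H.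
    rewrite [RHS](bigID (fun j => j \in S)) /= [X in _ = _ + X]big1 ?addr0.
      by apply: eq_bigr => j _; rewrite !mxE.
    by move=> j /ha; rewrite !mxE => ->; rewrite rmorph0 mul0r.
  move/forallP: HS => /(_ [ffun j => a 0 j]) /implyP.
  have -> : \sum_(j in S) iota ([ffun j => a 0 j] j) * c 0 j = 0.
    by apply: etrans hsum; apply: eq_bigr => j _; rewrite ffunE.
  rewrite eqxx => /(_ isT) /forall_inP Ha.
  have a0 : a = 0.
    apply/rowP => j; rewrite [RHS]mxE; case: (boolP (j \in S)) => jS.
      by have := Ha j jS; rewrite ffunE => /eqP.
    exact: ha.
  by apply: (row_free_inj rfB); rewrite mul0mx.
have : (k <= \rank B')%N.
  by have := mxrank_ker B'; rewrite K0 mxrank0 => /esym/eqP; rewrite subn_eq0.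
move/leq_trans/(_ (rank_leq_col B')).
move=> h; have hc := cardsC S; rewrite card_ord in hc; rewrite /T in h; lia.
Qed.

Lemma codeword (K : finFieldType) (F : fieldType) (iota : {rmorphism K -> F})
  (k n : nat) (G : 'M[F]_(k, n)) (HG : \rank G = k) (HMRD : is_MRD iota G)
  (B : 'M[K]_(k, n)) (HB : \rank B = k) :
  \rank (map_mx iota B *m G^T) = k.
Proof.
apply/eqP; rewrite eqn_leq rank_leq_row /= leqNgt; apply/negP => Hlt.
set S := map_mx iota B *m G^T.
have : kermx S^T != 0.
  by rewrite -mxrank_eq0 mxrank_ker mxrank_tr subn_eq0 -ltnNge.
case/rowV0Pn => u /sub_kermxP Hu unz.
rewrite /S trmx_mul trmxK mulmxA in Hu.
have rfG : row_free G by rewrite /row_free HG.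
have cnz : u *m G != 0.
  apply: contra unz => /eqP Hc; apply/eqP; apply: (row_free_inj rfG).
  by rewrite Hc mul0mx.
have := HMRD u cnz.
have : (Fq_rank iota (u *m G) <= n - k)%N.
  apply/bigmax_leqP => T HT; exact: (indep_card HB Hu HT).
move=> h1 h2; have := leq_trans h2 h1; lia.
Qed.

Lemma rank_mapG (K : finFieldType) (F : fieldType) (iota : {rmorphism K -> F})
  (k n : nat) (G : 'M[F]_(k, n)) (HG : \rank G = k) (HMRD : is_MRD iota G)
  (A : 'M[K]_n) (HA : (\rank A <= k)%N) :
  \rank (map_mx iota A *m G^T) = \rank A.
Proof.
have kn : (k <= n)%N by rewrite -HG rank_leq_col.
set r := \rank A.
pose B : 'M[K]_(k, n) := pid_mx k *m row_ebase A.
have rB : \rank B = k.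
  rewrite mxrankMfree ?rank_pid_mx //.
  by rewrite row_free_unit row_ebase_unit.
pose D : 'M[K]_(n, k) := col_ebase A *m pid_mx r.
have AE : A = D *m B.
  rewrite /D /B mulmxA -[col_ebase A *m _ *m _]mulmxA mul_pid_mx.
  by rewrite (minn_idPl HA) (minn_idPr HA) mulmx_ebase.
have cw := codeword HG HMRD rB.
apply/eqP; rewrite eqn_leq; apply/andP; split.
  by rewrite -[X in (_ <= X)%N](mxrank_map iota); exact: mxrankM_maxl.
have -> : map_mx iota A *m G^T = map_mx iota D *m (map_mx iota B *m G^T).
  by rewrite {1}AE map_mxM mulmxA.
rewrite mxrankMfree ?mxrank_map; last by rewrite /row_free cw.
rewrite /r {1}AE; exact: mxrankM_maxl.
Qed.

Definition Pb (K : finFieldType) n (A : 'M[K]_n) : 'M[K]_n := pid_mx (\rank A) *m row_ebase A.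

Lemma img_eq (K : finFieldType) (L : fieldType) (f : {rmorphism K -> L}) k n
  (H : 'M[L]_(k, n)) (A : 'M[K]_n) :
  <<subsp_img f H A>>%MS = <<map_mx f (Pb A) *m H^T>>%MS.
Proof.
apply/genmxP; apply/eqmxP.
rewrite /subsp_img -{1}(mulmx_ebase A) -mulmxA map_mxM -mulmxA.
apply: eqmxMfull; rewrite /row_full mxrank_map.
by have := col_ebase_unit A; rewrite -row_full_unit.
Qed.

Lemma Pb_pid (K : finFieldType) n (A : 'M[K]_n) : pid_mx (\rank A) *m Pb A = Pb A.
Proof. by rewrite /Pb mulmxA pid_mx_id // rank_leq_col. Qed.

Lemma rank_Pb (K : finFieldType) n (A : 'M[K]_n) : \rank (Pb A) = \rank A.
Proof.
rewrite /Pb mxrankMfree ?rank_pid_mx ?rank_leq_col //.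
by rewrite row_free_unit row_ebase_unit.
Qed.

Lemma injG (K : finFieldType) (F : fieldType) (iota : {rmorphism K -> F})
  (k n : nat) (G : 'M[F]_(k, n)) (HG : \rank G = k) (HMRD : is_MRD iota G)
  (A : 'M[K]_n) (HA : (\rank A <= k)%N) (x : 'rV[F]_n) :
  x *m copid_mx (\rank A) = 0 -> x *m (map_mx iota (Pb A) *m G^T) = 0 -> x = 0.
Proof.
move=> Hc Hy.
set r := \rank A.
have xE : x = x *m pid_mx r.
  by apply/eqP; move: Hc; rewrite mulmxBr mulmx1 => /eqP; rewrite subr_eq0.
set Q := map_mx iota (row_ebase A) *m G^T.
have PQ : map_mx iota (Pb A) *m G^T = pid_mx r *m Q.
  by rewrite /Pb map_mxM map_pid_mx mulmxA.
have rk : \rank ((pid_mx r : 'M[F]_n) *m Q) = r.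
  by rewrite -PQ rank_mapG // rank_Pb.
have cap0 : ((pid_mx r : 'M[F]_n) :&: kermx Q)%MS = 0.
  apply/eqP; rewrite -mxrank_eq0.
  have := mxrank_mul_ker (pid_mx r : 'M[F]_n) Q.
  rewrite rk rank_pid_mx ?rank_leq_col // => h; lia.
rewrite xE; apply/eqP; rewrite -submx0 -cap0 sub_capmx submxMl /=.
by apply/sub_kermxP; rewrite -mulmxA -PQ.
Qed.

Lemma Mmat_ext (R : comNzRingType) (k n l : nat) (Y Y' : 'I_l -> 'M[R]_(n,k))
  (C C' : 'I_l -> 'M[R]_n) :
  (forall i, Y i = Y' i) -> (forall i, C i = C' i) -> Mmat Y C = Mmat Y' C'.
Proof.
move=> HY HC; apply/matrixP => a b; rewrite /Mmat !mxE /fM; congr (mxvec _ 0 b).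
by apply/row_matrixP => i; rewrite !rowK HY HC.
Qed.

Definition phiR (K : finFieldType) (F : fieldType) (iota : {rmorphism K -> F}) (k n : nat)
  : {rmorphism K -> ratfun F k n} :=
  ((@tofrac {mpoly F[k * n]}) \o (@mpolyC (k * n) F) \o iota)%FUN.

Theorem mainTheorem19 (K : finFieldType) (F : fieldType) (iota : {rmorphism K -> F})
  (k n : nat) (G : 'M[F]_(k, n))
  (HGrank : \rank G = k)
  (HMRD : is_MRD iota G)
  (l : nat) (V : 'I_l -> 'M[K]_n)
  (HV : forall i, (\rank (V i) <= k)%N) :
  (\rank (\bigcap_(i < l) <<subsp_img iota G (V i)>>)%MS
   >= \rank (\bigcap_(i < l) <<subsp_img (to_ratfun iota k n) (Wgen F k n) (V i)>>)%MS)%N.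
Proof.
pose R := {mpoly F[k * n]}.
pose c := fun x : K => mpolyC (k * n) (iota x).
pose Pg : 'M[R]_(k, n) := \matrix_(i < k, j < n) 'X_(mxvec_index i j).
pose YP := fun i => map_mx c (Pb (V i)) *m Pg^T.
pose CP := fun i => (copid_mx (\rank (V i)) : 'M[R]_n).
pose MP := Mmat YP CP.
pose evf := fun t => mxvec G 0 t.
have evPg : map_mx (meval evf) Pg = G.
  by apply/matrixP => i j; rewrite !mxE mevalXU /evf mxvecE.
have frPg : map_mx (@tofrac R) Pg = Wgen F k n.
  by apply/matrixP => i j; rewrite !mxE.
have MG : map_mx (meval evf) MP = Mmat (fun i => map_mx iota (Pb (V i)) *m G^T)
                              (fun i => copid_mx (\rank (V i))).
  rewrite /MP map_Mmat; apply: Mmat_ext => i.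
    rewrite map_mxM -map_trmx evPg -map_mx_comp; congr (_ *m _).
    by apply: eq_map_mx => x; rewrite /= mevalC.
  by rewrite map_copid_mx.
have MW : map_mx (@tofrac R) MP =
    Mmat (fun i => map_mx (phiR iota k n) (Pb (V i)) *m (Wgen F k n)^T)
         (fun i => copid_mx (\rank (V i))).
  rewrite /MP map_Mmat; apply: Mmat_ext => i.
    by rewrite map_mxM -map_trmx frPg -map_mx_comp.
  by rewrite map_copid_mx.
have -> : (\bigcap_(i < l) <<subsp_img iota G (V i)>>)%MS =
    (\bigcap_(i < l) <<map_mx iota (Pb (V i)) *m G^T>>)%MS.
  by apply: eq_bigr => i _; exact: img_eq.
have -> : (\bigcap_(i < l) <<subsp_img (to_ratfun iota k n) (Wgen F k n) (V i)>>)%MS =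
    (\bigcap_(i < l) <<map_mx (phiR iota k n) (Pb (V i)) *m (Wgen F k n)^T>>)%MS.
  apply: eq_bigr => i _.
  exact: (img_eq (phiR iota k n) (Wgen F k n) (V i)).
apply: leq_trans (ker_le_cap _); last first.
  by move=> i x; apply: injG.
rewrite -MG.
apply: leq_trans (cap_le_ker (r := fun i => \rank (V i)) _ _ _) _.
- by move=> i; rewrite mulmxA -(map_pid_mx (phiR iota k n)) -map_mxM Pb_pid.
- by [].
- by move=> i; rewrite rank_leq_col.
rewrite -MW !mxrank_ker leq_sub2l //.
exact: rank_spec.
Qed.
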